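(* Let $A_1,\dots,A_N$ be trace class self-adjoint operators on a (separable) Hilbert space $\mathcal H$ with $\mathrm{Tr}\,A_i=0$ for each $1\le i\le N$. Suppose that for every orthogonal projection $P$ on $\mathcal H$ the set $C_P(A_1,\dots,A_N)$ is convex. Then there exists an orthonormal basis $\{g_k\}$ of $\mathcal H$ such that $\langle g_k,A_ig_k\rangle=0$ for all $i=1,\dots,N$ and all $k$.
   Context: For bounded self-adjoint operators $A_1,\dots,A_N$ on $\mathcal H$ and an orthogonal projection $P$ on $\mathcal H$, $C_P(A_1,\dots,A_N)=\{(\langle z,A_1z\rangle,\dots,\langle z,A_Nz\rangle): z\in P\mathcal H,\ \|z\|=1\}\subset\mathbb R^N$, the joint numerical range restricted to $P\mathcal H$. *)

(* Defs.v *)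
From mathcomp Require Import all_boot all_order all_algebra.
From mathcomp Require Import reals.
From mathcomp Require Import complex.
Set Implicit Arguments. Unset Strict Implicit. Unset Printing Implicit Defensive.
Import Order.TTheory GRing.Theory Num.Theory.
Local Open Scope ring_scope.

Section Hilbert.
Variable R : realType.
Local Notation C := R[i].
Variable V : lmodType C.
(* ip x y = <x, y>, conjugate-linear in x, linear in y (physics convention). *)
Variable ip : V -> V -> C.

Local Notation cRe := (@complex.Re R).
Local Notation cIm := (@complex.Im R).

Definition is_inner_product : Prop :=
  [/\ (forall x y z (a : C), ip x (a *: y + z) = a * ip x y + ip x z),
      (forall x y, ip y x = conjc (ip x y)),
      (forall x, 0 <= cRe (ip x x) /\ cIm (ip x x) = 0) &
      (forall x, ip x x = 0 -> x = 0)].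

Definition cmod (z : C) : R := Num.sqrt (cRe z ^+ 2 + cIm z ^+ 2).

Definition hnorm (x : V) : R := Num.sqrt (cRe (ip x x)).

Definition vconv (u : nat -> V) (l : V) : Prop :=
  forall e : R, 0 < e -> exists N : nat, forall n, (N <= n)%N -> hnorm (u n - l) < e.

Definition cconv (u : nat -> C) (l : C) : Prop :=
  forall e : R, 0 < e -> exists N : nat, forall n, (N <= n)%N -> cmod (u n - l) < e.

Definition complete_space : Prop :=
  forall u : nat -> V,
    (forall e : R, 0 < e -> exists N : nat, forall m n, (N <= m)%N -> (N <= n)%N ->
       hnorm (u m - u n) < e) ->
    exists l, vconv u l.

Definition separable_space : Prop :=
  exists d : nat -> V, forall x (e : R), 0 < e -> exists n, hnorm (x - d n) < e.

Definition bounded_linear (A : V -> V) : Prop :=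
  (forall (a : C) x y, A (a *: x + y) = a *: A x + A y) /\
  exists M : R, forall x, hnorm (A x) <= M * hnorm x.

Definition self_adjoint (A : V -> V) : Prop :=
  bounded_linear A /\ forall x y, ip (A x) y = ip x (A y).

Definition orth_projection (P : V -> V) : Prop :=
  self_adjoint P /\ forall x, P (P x) = P x.

(* A is trace class (nuclear) with trace t:
   A z = sum_n <y_n, z> x_n with sum_n ||x_n|| ||y_n|| < oo,
   and Tr A = sum_n <y_n, x_n>. *)
Definition trace_class_with_trace (A : V -> V) (t : C) : Prop :=
  exists x y : nat -> V,
    (exists M : R, forall n, \sum_(k < n) hnorm (x k) * hnorm (y k) <= M) /\
    (forall z, vconv (fun n => \sum_(k < n) ip (y k) z *: x k) (A z)) /\
    cconv (fun n => \sum_(k < n) ip (y k) (x k)) t.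

Definition joint_num_range (N : nat) (A : 'I_N -> V -> V) (P : V -> V) (w : 'rV[R]_N) : Prop :=
  exists z : V, P z = z /\ hnorm z = 1 /\ forall i, w 0 i = cRe (ip z (A i z)).

Definition convex_set (N : nat) (S : 'rV[R]_N -> Prop) : Prop :=
  forall u v (t : R), S u -> S v -> 0 <= t -> t <= 1 -> S (t *: u + (1 - t) *: v).

(* orthonormal basis = maximal orthonormal set *)
Definition orthonormal_basis (B : V -> Prop) : Prop :=
  [/\ (forall u, B u -> ip u u = 1),
      (forall u v, B u -> B v -> u <> v -> ip u v = 0) &
      (forall x, (forall u, B u -> ip u x = 0) -> x = 0)].

End Hilbert.

(* Main.v *)
Require Import Defs.
From mathcomp Require Import all_boot all_order all_algebra.
From mathcomp Require Import reals complex.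
From mathcomp Require Import classical_sets boolp.
From mathcomp Require Import ring lra.
Import Order.TTheory GRing.Theory Num.Theory.
Local Open Scope ring_scope.
Set Implicit Arguments. Unset Strict Implicit. Unset Printing Implicit Defensive.

Section Convex.
Variable R : realType.

Definition cvx n (K : ('I_n -> R) -> Prop) :=
  forall u v t, K u -> K v -> 0 <= t -> t <= 1 -> K (fun i => t * u i + (1 - t) * v i).
Definition lin n (l u : 'I_n -> R) := \sum_i l i * u i.

Lemma lin_comb n (l u v : 'I_n -> R) t :
  lin l (fun i => t * u i + (1 - t) * v i) = t * lin l u + (1 - t) * lin l v.
Proof.
rewrite /lin !mulr_sumr -big_split /=; apply: eq_bigr => i _; ring.
Qed.

Definition extj n (j : 'I_n.+1) (f : 'I_n -> R) (t : R) : 'I_n.+1 -> R :=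
  fun i => if unlift j i is Some k then f k else t.
Lemma extj_j n (j : 'I_n.+1) f t : extj j f t j = t.
Proof. by rewrite /extj unlift_none. Qed.
Lemma extj_lift n (j : 'I_n.+1) f t k : extj j f t (lift j k) = f k.
Proof. by rewrite /extj liftK. Qed.
Lemma extjE n (j : 'I_n.+1) (u : 'I_n.+1 -> R) : u = extj j (u \o lift j) (u j).
Proof. by apply: funext => i; rewrite /extj; case: unliftP => [k ->|->]. Qed.

Lemma lin_split n (j : 'I_n.+1) (l u : 'I_n.+1 -> R) :
  lin l u = l j * u j + lin (l \o lift j) (u \o lift j).
Proof. by rewrite /lin (bigD1_ord j) //=. Qed.

Lemma lin0 n (l : 'I_n -> R) : lin l (fun _ => 0) = 0.
Proof. by rewrite /lin big1 // => i _; rewrite mulr0. Qed.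

Lemma sep n (K : ('I_n -> R) -> Prop) : cvx K -> ~ K (fun _ => 0) -> (exists u, K u) ->
  exists l : 'I_n -> R, (exists i, l i != 0) /\ forall u, K u -> 0 <= lin l u.
Proof.
elim: n K => [|n IH] K cK nK0 [w0 Kw0].
  by exfalso; apply: nK0; rewrite (_ : (fun _ => 0) = w0) //; apply: funext => -[].
pose j : 'I_n.+1 := ord0.
pose e0 : 'I_n.+1 -> R := fun i => (i == j)%:R.
have line0 u : lin e0 u = u j.
  rewrite (lin_split j) /e0 eqxx mul1r /lin big1 ?addr0 // => i _ /=.
  by rewrite mul0r.
have [Hpos|] := pselect (forall u, K u -> 0 <= u j).
  by exists e0; split; [exists j; rewrite /e0 eqxx oner_eq0|move=> u /Hpos; rewrite line0].
move=> /existsNP [q /not_implyP [Kq /negP]]; rewrite -ltNge => q0.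
have [Hneg|] := pselect (forall u, K u -> u j <= 0).
  exists (fun i => - e0 i); split; first by exists j; rewrite /e0 eqxx oppr_eq0 oner_eq0.
  move=> u /Hneg; rewrite /lin.
  under eq_bigr do rewrite mulNr.
  by rewrite sumrN -/(lin e0 u) line0 oppr_ge0.
move=> /existsNP [p /not_implyP [Kp /negP]]; rewrite -ltNge => p0.
pose K0 (f : 'I_n -> R) := K (extj j f 0).
have cK0 : cvx K0.
  move=> f g t Kf Kg t0 t1; rewrite /K0.
  have -> : extj j (fun i => t * f i + (1 - t) * g i) 0 =
            (fun i => t * extj j f 0 i + (1 - t) * extj j g 0 i).
    by apply: funext => i; rewrite /extj; case: (unlift j i) => [k|] /=; ring.
  exact: cK.
(* combination with zero j-coordinate lies in K0 *)
pose L (u : 'I_n.+1 -> R) := lin (fun _ => 0) (u \o lift j).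
have comb u v : K u -> K v -> 0 < u j -> v j < 0 ->
    K0 (fun i => (- v j / (u j - v j)) * (u \o lift j) i + (1 - (- v j / (u j - v j))) * (v \o lift j) i).
  move=> Ku Kv u0 v0; rewrite /K0.
  have den : 0 < u j - v j by lra.
  set lam := - v j / (u j - v j).
  have l0 : 0 <= lam by rewrite /lam divr_ge0 // ?ltW // oppr_gt0.
  have l1 : lam <= 1 by rewrite /lam ler_pdivrMr // mul1r; lra.
  have := cK u v lam Ku Kv l0 l1.
  congr K; apply: funext => i; rewrite /extj; case: unliftP => [k ->|->] //.
  rewrite /lam; field; lra.
have nK00 : ~ K0 (fun _ => 0).
  rewrite /K0 (_ : extj j _ 0 = fun _ => 0) //.
  by apply: funext => i; rewrite /extj; case: (unlift j i).
have [l1 [[i1 l1i1] Hl1]] := IH K0 cK0 nK00 (ex_intro _ _ (comb p q Kp Kq p0 q0)).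
pose Lf (u : 'I_n.+1 -> R) := lin l1 (u \o lift j).
have key u v : K u -> K v -> 0 < u j -> v j < 0 -> - Lf u / u j <= Lf v / (- v j).
  move=> Ku Kv u0 v0.
  have := Hl1 _ (comb u v Ku Kv u0 v0).
  rewrite lin_comb -/(Lf u) -/(Lf v).
  have den : 0 < u j - v j by lra.
  move=> H.
  have H2 : 0 <= (- v j) * Lf u + u j * Lf v.
    have -> : (- v j) * Lf u + u j * Lf v =
      (u j - v j) * (- v j / (u j - v j) * Lf u + (1 - - v j / (u j - v j)) * Lf v).
      by field; lra.
    by rewrite mulr_ge0 // ltW.
  rewrite -subr_ge0.
  have -> : Lf v / - v j - - Lf u / u j = (- v j * Lf u + u j * Lf v) / (u j * - v j).
    by field; apply/andP; split; apply/negP => /eqP; lra.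
  by rewrite divr_ge0 // mulr_ge0 //; lra.
pose S : set R := fun x => exists u, [/\ K u, 0 < u j & x = - Lf u / u j].
have Sne : (S !=set0)%classic by exists (- Lf p / p j); exists p.
have Sub : ubound S (Lf q / (- q j)).
  by move=> _ [u [Ku u0 ->]]; apply: key.
pose c := sup S.
exists (extj j l1 c); split.
  by exists (lift j i1); rewrite extj_lift.
move=> u Ku.
rewrite (lin_split j) extj_j.
have -> : (extj j l1 c \o lift j) = l1 by apply: funext => k /=; rewrite extj_lift.
rewrite -/(Lf u).
have [u0|u0|u0] := ltgtP (u j) 0.
- have : c <= Lf u / (- u j).
    by apply: ge_sup => // _ [v [Kv v0 ->]]; apply: key.
  rewrite ler_pdivlMr ?oppr_gt0 //; nra.
- have : - Lf u / u j <= c.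
    by apply: sup_upper_bound; [split => //; exists (Lf q / (- q j)) | exists u].
  rewrite ler_pdivrMr //; nra.
- rewrite u0 mulr0 add0r; apply: Hl1; rewrite /K0.
  by rewrite -u0 -extjE.
Qed.

Lemma zero_in n (K : ('I_n -> R) -> Prop) : cvx K -> (exists u, K u) ->
  (forall l, (forall u, K u -> 0 <= lin l u) -> forall u, K u -> lin l u = 0) ->
  K (fun _ => 0).
Proof.
elim: n K => [|n IH] K cK [w0 Kw0] Hb.
  by rewrite (_ : (fun _ => 0) = w0) //; apply: funext => -[].
have [//|nK0] := pselect (K (fun _ => 0)).
have [l [[j lj] Hl]] := sep cK nK0 (ex_intro _ _ Kw0).
have Hl0 := Hb l Hl.
pose K' (f : 'I_n -> R) := exists u, K u /\ f = u \o lift j.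
have cK' : cvx K'.
  move=> f g t [u [Ku ->]] [v [Kv ->]] t0 t1.
  by exists (fun i => t * u i + (1 - t) * v i); split; [exact: cK|].
have Hb' : forall l', (forall f, K' f -> 0 <= lin l' f) -> forall f, K' f -> lin l' f = 0.
  move=> l' Hl' f [v [Kv ->]].
  have E x : lin (extj j l' 0) x = lin l' (x \o lift j).
    rewrite (lin_split j) extj_j mul0r add0r; congr lin.
    by apply: funext => k /=; rewrite extj_lift.
  rewrite -E; apply: (Hb _ _ _ Kv) => x Kx.
  by rewrite E; apply: Hl'; exists x.
have := IH K' cK' (ex_intro _ _ (ex_intro _ w0 (conj Kw0 erefl))) Hb'.
move=> [v [Kv /esym v0]].
exfalso; apply: nK0.
have := Hl0 _ Kv; rewrite (lin_split j) v0 lin0 addr0 => /eqP.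
rewrite mulf_eq0 (negbTE lj) /= => /eqP vj.
suff -> : (fun _ : 'I_n.+1 => 0) = v by [].
apply: funext => i; case: (unliftP j i) => [k ->|->] //.
by rewrite -[v (lift j k)]/((v \o lift j) k) v0.
Qed.

End Convex.

Local Open Scope complex_scope.

Section HilbA.
Variable R : realType.
Local Notation C := R[i].
Variable V : lmodType C.
Variable ip : V -> V -> C.
Hypothesis Hip : is_inner_product ip.

Local Notation cRe := (@complex.Re R).
Local Notation cIm := (@complex.Im R).

Lemma ipLin x y z (a : C) : ip x (a *: y + z) = a * ip x y + ip x z.
Proof. by have [] := Hip. Qed.
Lemma ipSym x y : ip y x = conjc (ip x y).
Proof. by have [] := Hip. Qed.
Lemma ipPos x : 0 <= cRe (ip x x) /\ cIm (ip x x) = 0.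
Proof. by have [] := Hip. Qed.
Lemma ipDef x : ip x x = 0 -> x = 0.
Proof. by have [_ _ _ H] := Hip; apply: H. Qed.

Lemma cjD (a b : C) : conjc (a + b) = conjc a + conjc b.
Proof. exact: rmorphD. Qed.
Lemma cjM (a b : C) : conjc (a * b) = conjc a * conjc b.
Proof. exact: rmorphM. Qed.
Lemma cjN (a : C) : conjc (- a) = - conjc a.
Proof. exact: rmorphN. Qed.
Lemma cjK (a : C) : conjc (conjc a) = a.
Proof. exact: conjcK. Qed.
Lemma cjV (a : C) : conjc (a^-1) = (conjc a)^-1.
Proof. exact: conjc_inv. Qed.

Lemma ip0r x : ip x 0 = 0.
Proof.
have := ipLin x 0 0 1; rewrite scale1r addr0 mul1r => H.
by apply: (addrI (ip x 0)); rewrite addr0 -H.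
Qed.
Lemma ipDr x y z : ip x (y + z) = ip x y + ip x z.
Proof. by have := ipLin x y z 1; rewrite scale1r mul1r. Qed.
Lemma ipZr x y a : ip x (a *: y) = a * ip x y.
Proof. by rewrite -[a *: y]addr0 ipLin ip0r addr0. Qed.
Lemma ipNr x y : ip x (- y) = - ip x y.
Proof. by rewrite -scaleN1r ipZr mulN1r. Qed.
Lemma ipBr x y z : ip x (y - z) = ip x y - ip x z.
Proof. by rewrite ipDr ipNr. Qed.
Lemma ip0l x : ip 0 x = 0.
Proof. by rewrite ipSym ip0r conjc0. Qed.
Lemma ipDl x y z : ip (x + y) z = ip x z + ip y z.
Proof. by rewrite ipSym ipDr cjD -!ipSym. Qed.
Lemma ipZl x y a : ip (a *: x) y = conjc a * ip x y.
Proof. by rewrite ipSym ipZr cjM -!ipSym. Qed.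
Lemma ipNl x y : ip (- x) y = - ip x y.
Proof. by rewrite ipSym ipNr cjN -ipSym. Qed.
Lemma ipBl x y z : ip (x - y) z = ip x z - ip y z.
Proof. by rewrite ipDl ipNl. Qed.
Lemma ip_sumr I (r : seq I) (P : pred I) (F : I -> V) x :
  ip x (\sum_(i <- r | P i) F i) = \sum_(i <- r | P i) ip x (F i).
Proof. exact: (big_morph (ip x) (ipDr x) (ip0r x)). Qed.
Lemma ip_suml I (r : seq I) (P : pred I) (F : I -> V) x :
  ip (\sum_(i <- r | P i) F i) x = \sum_(i <- r | P i) ip (F i) x.
Proof. exact: (big_morph (ip^~ x) (fun a b => ipDl a b x) (ip0l x)). Qed.

Lemma ipxx_ge0 x : 0 <= ip x x.
Proof. by rewrite lecE /=; case: (ipPos x) => -> ->; rewrite eqxx. Qed.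
Lemma ipxx_real x : ip x x = (cRe (ip x x))%:C.
Proof. by case: (ip x x) (ipPos x) => a b /= [_ ->]. Qed.
Lemma ipxx_eq0 x : (ip x x == 0) = (x == 0).
Proof. by apply/eqP/eqP => [/ipDef|->]; rewrite ?ip0r. Qed.

Lemma conjc_norm (z : C) : conjc z * z = `|z| ^+ 2.
Proof. by rewrite sqr_normc mulrC. Qed.

Lemma CS x y : `|ip x y| ^+ 2 <= ip x x * ip y y.
Proof.
have [->|y0] := eqVneq y 0; first by rewrite ip0r ip0l normr0 expr0n /= mulr0.
have yy0 : ip y y != 0 by rewrite ipxx_eq0.
pose c := ip y x / ip y y.
have := ipxx_ge0 (x - c *: y).
rewrite !ipBl !ipBr !ipZl !ipZr.
have -> : conjc c = ip x y / ip y y.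
  by rewrite /c cjM -ipSym cjV -(ipSym y y).
rewrite /c (ipSym x y).
set a := ip x y; set b := ip y y.
have -> : ip x x - a^*%C / b * a - (a / b * a^*%C - a / b * (a^*%C / b * b)) = ip x x - `|a| ^+ 2 / b.
  by rewrite -conjc_norm; field.
have bgt0 : 0 < b by rewrite lt_def yy0 ipxx_ge0.
by rewrite subr_ge0 ler_pdivrMr // mulrC.
Qed.

Lemma normC_cmod (z : C) : `|z| = (cmod z)%:C.
Proof. by rewrite normc_def. Qed.
Lemma cmod_ge0 (z : C) : 0 <= cmod z.
Proof. by have := normr_ge0 z; rewrite normC_cmod ler0c. Qed.
Lemma cmodD (a b : C) : cmod (a + b) <= cmod a + cmod b.
Proof. by rewrite -lecR rmorphD /= -!normC_cmod ler_normD. Qed.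
Lemma cmodM (a b : C) : cmod (a * b) = cmod a * cmod b.
Proof. by apply: complexI; rewrite rmorphM /= -!normC_cmod normrM. Qed.
Lemma cmodN (a : C) : cmod (- a) = cmod a.
Proof. by apply: complexI; rewrite -!normC_cmod normrN. Qed.
Lemma cmodB (a b : C) : cmod (a - b) = cmod (b - a).
Proof. by rewrite -cmodN opprB. Qed.
Lemma cmod0 : cmod (0 : C) = 0.
Proof. by apply: complexI; rewrite -!normC_cmod normr0. Qed.
Lemma cmod_eq0 (a : C) : (cmod a == 0) = (a == 0).
Proof. by rewrite -(inj_eq (@complexI _)) -normC_cmod normr_eq0. Qed.
Lemma cmodC (a : C) : cmod (conjc a) = cmod a.
Proof. by apply: complexI; rewrite -!normC_cmod normcJ. Qed.
Lemma cmod_real (r : R) : cmod (r%:C) = `|r|.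
Proof. by rewrite /cmod /= expr0n /= addr0 sqrtr_sqr. Qed.
Lemma Re_le_cmod (a : C) : cRe a <= cmod a.
Proof.
apply: (le_trans (ler_norm _)).
by rewrite -lecR -normC_cmod; apply: normc_ge_Re.
Qed.
Lemma cmod_sum I (r : seq I) (P : pred I) (F : I -> C) :
  cmod (\sum_(i <- r | P i) F i) <= \sum_(i <- r | P i) cmod (F i).
Proof.
elim/big_rec2: _ => [|i y1 y2 _ H]; first by rewrite cmod0.
by apply: (le_trans (cmodD _ _)); rewrite lerD2l.
Qed.
Lemma cmod_sqr (a : C) : (cmod a) ^+ 2 = cRe (conjc a * a).
Proof.
apply: complexI; rewrite rmorphXn /= -normC_cmod -conjc_norm.
by case: a => x y /=; simpc; rewrite (mulrC y x) subrr.
Qed.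

Definition nsq x := cRe (ip x x).
Lemma nsq_ge0 x : 0 <= nsq x.
Proof. by case: (ipPos x). Qed.
Lemma ip_nsq x : ip x x = (nsq x)%:C.
Proof. exact: ipxx_real. Qed.
Lemma hnorm_ge0 x : 0 <= hnorm ip x.
Proof. exact: sqrtr_ge0. Qed.
Lemma hnorm_sq x : hnorm ip x ^+ 2 = nsq x.
Proof. by rewrite /hnorm sqr_sqrtr // nsq_ge0. Qed.
Lemma nsq_eq0 x : (nsq x == 0) = (x == 0).
Proof. by rewrite -ipxx_eq0 ip_nsq (inj_eq (@complexI _)). Qed.
Lemma hnorm_eq0 x : (hnorm ip x == 0) = (x == 0).
Proof. by rewrite /hnorm sqrtr_eq0 -nsq_eq0 eq_le nsq_ge0 andbT. Qed.
Lemma hnorm0 : hnorm ip 0 = 0.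
Proof. by apply/eqP; rewrite hnorm_eq0. Qed.

Lemma cmod_ip x y : cmod (ip x y) <= hnorm ip x * hnorm ip y.
Proof.
have h := CS x y.
rewrite normC_cmod !ip_nsq -rmorphXn -rmorphM lecR in h.
rewrite -(ler_pXn2r (_ : (0 < 2)%N)) // ?nnegrE ?cmod_ge0 //.
  by rewrite exprMn !hnorm_sq.
by rewrite mulr_ge0 // hnorm_ge0.
Qed.

Lemma nsqD x y : nsq (x + y) = nsq x + nsq y + 2 * cRe (ip x y).
Proof.
rewrite /nsq ipDl !ipDr (ipSym x y) !raddfD /=.
have -> : cRe (conjc (ip x y)) = cRe (ip x y) by case: (ip x y).
lra.
Qed.

Lemma hnormD x y : hnorm ip (x + y) <= hnorm ip x + hnorm ip y.
Proof.
rewrite -(ler_pXn2r (_ : (0 < 2)%N)) ?nnegrE ?addr_ge0 ?hnorm_ge0 //.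
rewrite hnorm_sq nsqD sqrrD !hnorm_sq.
have := le_trans (Re_le_cmod (ip x y)) (cmod_ip x y).
lra.
Qed.

Lemma nsqZ a x : nsq (a *: x) = cmod a ^+ 2 * nsq x.
Proof.
rewrite /nsq ipZl ipZr mulrA cmod_sqr ip_nsq.
by case: (conjc a * a) => u v /=; rewrite !mulr0 subr0.
Qed.

Lemma hnormZ a x : hnorm ip (a *: x) = cmod a * hnorm ip x.
Proof.
rewrite /hnorm -/(nsq _) nsqZ sqrtrM ?sqrtr_sqr ?ger0_norm ?cmod_ge0 //.
by rewrite exprn_ge0 // cmod_ge0.
Qed.
Lemma hnormN x : hnorm ip (- x) = hnorm ip x.
Proof.
have c1 : cmod (1 : C) = 1 by have := cmod_real 1; rewrite normr1.
by rewrite -scaleN1r hnormZ cmodN c1 mul1r.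
Qed.
Lemma hnormB x y : hnorm ip (x - y) = hnorm ip (y - x).
Proof. by rewrite -hnormN opprB. Qed.

Lemma sum_delta (M : nmodType) (s : seq V) (e : V) (G : V -> M) :
  uniq s -> e \in s -> (forall f, f \in s -> f != e -> G f = 0) ->
  \sum_(f <- s) G f = G e.
Proof.
move=> us es H; rewrite (bigD1_seq e) //= big_seq_cond big1 ?addr0 //.
by move=> f /andP[fs fe]; apply: H.
Qed.

Definition orthoS (s : seq V) :=
  uniq s /\ forall u v, u \in s -> v \in s -> ip u v = (u == v)%:R.
Definition proj (s : seq V) x := \sum_(e <- s) ip e x *: e.
Definition bs (s : seq V) x := \sum_(e <- s) cmod (ip e x) ^+ 2.

Section Proj.
Variable s : seq V.
Hypothesis Hs : orthoS s.

Lemma proj_ip e x : e \in s -> ip e (proj s x) = ip e x.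
Proof.
case: Hs => us Ho es; rewrite /proj ip_sumr.
rewrite (@sum_delta _ s e (fun f => ip e (ip f x *: f))) //.
  by rewrite ipZr (Ho e e) // eqxx mulr1.
by move=> f fs fe; rewrite ipZr (Ho e f) // eq_sym (negbTE fe) mulr0.
Qed.

Lemma proj_orth g x : (forall e, e \in s -> ip g e = 0) -> ip g (proj s x) = 0.
Proof.
move=> H; rewrite /proj ip_sumr big_seq big1 // => e es.
by rewrite ipZr H // mulr0.
Qed.

Lemma projK x : proj s (proj s x) = proj s x.
Proof. by apply: eq_big_seq => e es; rewrite proj_ip. Qed.

Lemma proj_lin a x y : proj s (a *: x + y) = a *: proj s x + proj s y.
Proof.
rewrite /proj scaler_sumr -big_split /=; apply: eq_bigr => e _.
by rewrite ipLin scalerDl scalerA.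
Qed.

Lemma proj_sa x y : ip (proj s x) y = ip x (proj s y).
Proof.
rewrite /proj ip_suml ip_sumr; apply: eq_bigr => e _.
by rewrite ipZl ipZr (ipSym e x) mulrC.
Qed.

Lemma proj_id e : e \in s -> proj s e = e.
Proof.
case: Hs => us Ho es; rewrite /proj.
rewrite (@sum_delta _ s e (fun f => ip f e *: f)) //.
  by rewrite (Ho e e) // eqxx scale1r.
by move=> f fs fe; rewrite (Ho f e) // (negbTE fe) scale0r.
Qed.

Lemma ip_proj x : ip x (proj s x) = (bs s x)%:C.
Proof.
rewrite /proj /bs ip_sumr rmorph_sum; apply: eq_bigr => e _.
rewrite ipZr (ipSym x e) rmorphXn /= -normC_cmod -conjc_norm.
by rewrite cjK mulrC.
Qed.

Lemma bs_ge0 x : 0 <= bs s x.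
Proof. by apply: sumr_ge0 => e _; rewrite exprn_ge0 // cmod_ge0. Qed.

Lemma nsq_proj x : nsq (proj s x) = bs s x.
Proof. by rewrite /nsq proj_sa projK ip_proj. Qed.

Lemma nsq_sub_proj x : nsq (x - proj s x) = nsq x - bs s x.
Proof.
rewrite /nsq ipBl !ipBr (proj_sa x (proj s x)) projK (proj_sa x x) ip_proj.
rewrite !raddfB /=; lra.
Qed.

Lemma bs_le x : bs s x <= nsq x.
Proof. by have := nsq_ge0 (x - proj s x); rewrite nsq_sub_proj subr_ge0. Qed.

Lemma hnorm_proj x : hnorm ip (proj s x) <= hnorm ip x.
Proof. by rewrite /hnorm ler_wsqrtr // -/(nsq _) nsq_proj bs_le. Qed.

Lemma hnorm_sub_proj x : hnorm ip (x - proj s x) <= hnorm ip x.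
Proof.
by rewrite /hnorm ler_wsqrtr // -!/(nsq _) nsq_sub_proj gerBl bs_ge0.
Qed.

Lemma proj_orth_projection : orth_projection ip (proj s).
Proof.
split; last exact: projK.
split; last exact: proj_sa.
split; first exact: proj_lin.
by exists 1 => x; rewrite mul1r hnorm_proj.
Qed.

End Proj.

Lemma proj_Z s a x : proj s (a *: x) = a *: proj s x.
Proof.
rewrite /proj scaler_sumr; apply: eq_bigr => e _.
by rewrite ipZr scalerA.
Qed.
Lemma proj_D s x y : proj s (x + y) = proj s x + proj s y.
Proof.
rewrite /proj -big_split /=; apply: eq_bigr => e _.
by rewrite ipDr scalerDl.
Qed.

Lemma unitE z : (hnorm ip z = 1) <-> (ip z z = 1).
Proof.
rewrite ip_nsq; split => [h|h].
  by rewrite -hnorm_sq h expr1n.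
have h1 : nsq z = 1 by case: h.
by rewrite /hnorm -/(nsq z) h1 sqrtr1.
Qed.

Lemma unit_hnorm z : hnorm ip z = 1 -> ip z z = 1.
Proof. by move/unitE. Qed.
Lemma hnorm_unit z : ip z z = 1 -> hnorm ip z = 1.
Proof. by move/unitE. Qed.

Lemma two_span (B : V -> Prop) z1 z2 :
  ip z1 z1 = 1 -> ip z2 z2 = 1 ->
  (forall g, B g -> ip g z1 = 0) -> (forall g, B g -> ip g z2 = 0) ->
  exists s, [/\ orthoS s, (forall e, e \in s -> forall g, B g -> ip g e = 0),
     proj s z1 = z1 & proj s z2 = z2].
Proof.
move=> u1 u2 B1 B2.
set c := ip z1 z2; set w := z2 - c *: z1.
have w1 : ip z1 w = 0 by rewrite /w ipBr ipZr u1 mulr1 subrr.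
have wB g : B g -> ip g w = 0 by move=> Bg; rewrite /w ipBr ipZr B1 // B2 // mulr0 subrr.
have [w0|wn0] := eqVneq w 0.
  have z2E : z2 = c *: z1 by apply/eqP; rewrite -subr_eq0 -/w w0.
  have os : orthoS [:: z1].
    by split => // u v; rewrite !inE => /eqP -> /eqP ->; rewrite eqxx u1.
  exists [:: z1]; split => //.
  - by move=> e; rewrite inE => /eqP -> g Bg; apply: B1.
  - by rewrite proj_id // mem_head.
  - by rewrite {1 2}z2E proj_Z proj_id // mem_head.
set h := hnorm ip w.
have hpos : 0 < h by rewrite lt_def hnorm_eq0 wn0 hnorm_ge0.
set e2 := (h^-1)%:C *: w.
have e2u : ip e2 e2 = 1.
  rewrite /e2 ipZl ipZr ip_nsq -hnorm_sq -/h conjc_real -!rmorphM.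
  have -> : h^-1 * (h^-1 * h ^+ 2) = 1 by field; rewrite gt_eqF.
  by [].
have e21 : ip z1 e2 = 0 by rewrite /e2 ipZr w1 mulr0.
have e12 : ip e2 z1 = 0 by rewrite ipSym e21 conjc0.
have ne : z1 != e2.
  by apply/eqP => E; move: u1; rewrite {2}E e21 => /eqP; rewrite eq_sym oner_eq0.
have os : orthoS [:: z1; e2].
  split; first by rewrite /= inE ne.
  move=> u v; rewrite !inE => /orP[] /eqP -> /orP[] /eqP ->;
    by rewrite ?eqxx ?u1 ?e2u ?e21 ?e12 ?(negbTE ne) // eq_sym (negbTE ne).
have z2E : z2 = c *: z1 + h%:C *: e2.
  rewrite /e2 scalerA -rmorphM mulfV ?gt_eqF // scale1r /w.
  by rewrite addrC subrK.
have e2B g : B g -> ip g e2 = 0 by move=> Bg; rewrite /e2 ipZr wB // mulr0.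
clearbody e2.
exists [:: z1; e2]; split => //.
- move=> e; rewrite !inE => /orP[] /eqP -> g Bg; first exact: B1.
  exact: e2B.
- by rewrite proj_id // mem_head.
- rewrite {1 2}z2E proj_D !proj_Z !proj_id //.
  all: by rewrite !inE eqxx ?orbT.
Qed.

Definition KW N (A : 'I_N -> V -> V) (B : V -> Prop) (f : 'I_N -> R) :=
  exists z, [/\ forall g, B g -> ip g z = 0, ip z z = 1 & forall i, f i = cRe (ip z (A i z))].

Lemma KW_cvx N (A : 'I_N -> V -> V) (B : V -> Prop) :
  (forall P, orth_projection ip P -> convex_set (joint_num_range ip A P)) ->
  cvx (KW A B).
Proof.
move=> Hc f1 f2 t [z1 [B1 u1 F1]] [z2 [B2 u2 F2]] t0 t1.
have [s [os sB p1 p2]] := two_span u1 u2 B1 B2.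
have J1 : joint_num_range ip A (proj s) (\row_i f1 i).
  exists z1; split => //; split; first exact: hnorm_unit.
  by move=> i; rewrite mxE F1.
have J2 : joint_num_range ip A (proj s) (\row_i f2 i).
  exists z2; split => //; split; first exact: hnorm_unit.
  by move=> i; rewrite mxE F2.
have [z [pz [hz Fz]]] := Hc _ (proj_orth_projection os) _ _ _ J1 J2 t0 t1.
exists z; split.
- by move=> g Bg; rewrite -pz; apply: proj_orth => e es; apply: sB.
- exact: unit_hnorm.
- by move=> i; rewrite -Fz !mxE.
Qed.

Lemma sum_split (M : nmodType) (s s' : seq V) (F : V -> M) :
  uniq s -> uniq s' -> {subset s <= s'} ->
  \sum_(e <- s') F e = \sum_(e <- s) F e + \sum_(e <- [seq f <- s' | f \notin s]) F e.
Proof.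
move=> us us' ss'; rewrite (bigID (fun e => e \in s)) /= big_filter; congr (_ + _).
rewrite -big_filter; apply: perm_big; apply: uniq_perm => //.
  exact: filter_uniq.
by move=> e; rewrite mem_filter; case: (boolP (e \in s)) => es //=; rewrite (ss' _ es).
Qed.

Section ONS.
Variable S : V -> Prop.
Hypothesis HS1 : forall u, S u -> ip u u = 1.
Hypothesis HS2 : forall u v, S u -> S v -> u <> v -> ip u v = 0.

Definition fin (s : seq V) := uniq s /\ forall e, e \in s -> S e.

Lemma fin_ortho s : fin s -> orthoS s.
Proof.
case=> us sS; split => // u v us' vs'.
have [->|uv] := eqVneq u v; first by rewrite HS1 //; apply: sS.
by rewrite HS2 //; [apply: sS|apply: sS|apply/eqP].
Qed.

Lemma fin_filter s p : fin s -> fin (filter p s).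
Proof.
case=> us sS; split; first exact: filter_uniq.
by move=> e; rewrite mem_filter => /andP[_ /sS].
Qed.

Lemma fin_undup_cat s1 s2 : fin s1 -> fin s2 -> fin (undup (s1 ++ s2)).
Proof.
move=> [_ h1] [_ h2]; split; first exact: undup_uniq.
by move=> e; rewrite mem_undup mem_cat => /orP[/h1|/h2].
Qed.

Definition ev (Q : seq V -> Prop) :=
  exists s0, fin s0 /\ forall s, fin s -> {subset s0 <= s} -> Q s.

Lemma ev_and Q1 Q2 : ev Q1 -> ev Q2 -> ev (fun s => Q1 s /\ Q2 s).
Proof.
move=> [s1 [f1 H1]] [s2 [f2 H2]]; exists (undup (s1 ++ s2)).
split; first exact: fin_undup_cat.
move=> s fs sub; split; [apply: H1|apply: H2] => // e es; apply: sub;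
  by rewrite mem_undup mem_cat es ?orbT.
Qed.

Lemma ev_mono (Q1 Q2 : seq V -> Prop) : (forall s, fin s -> Q1 s -> Q2 s) -> ev Q1 -> ev Q2.
Proof. by move=> H [s0 [f0 H0]]; exists s0; split => // s fs sub; apply: H => //; apply: H0. Qed.

Lemma ev_nat (K : nat) (Q : nat -> seq V -> Prop) :
  (forall k, (k < K)%N -> ev (Q k)) -> ev (fun s => forall k, (k < K)%N -> Q k s).
Proof.
elim: K => [|K IH] H.
  by exists [::]; split; [split|move=> s _ _ k; rewrite ltn0].
have := ev_and (IH (fun k kK => H k (ltnW kK))) (H K (ltnSn K)).
apply: ev_mono => s _ [h1 h2] k; rewrite ltnS leq_eqVlt => /orP[/eqP ->//|/h1//].
Qed.

Lemma ev_seq (T : eqType) (r : seq T) (Q : T -> seq V -> Prop) :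
  (forall a, a \in r -> ev (Q a)) -> ev (fun s => forall a, a \in r -> Q a s).
Proof.
elim: r => [|a r IH] H.
  by exists [::]; split; [split|move=> s _ _ k; rewrite in_nil].
have := ev_and (IH (fun b (br : b \in r) => H b (@mem_behead _ (a :: r) b br))) (H a (mem_head a r)).
apply: ev_mono => s _ [h1 h2] b; rewrite inE => /orP[/eqP ->//|/h1//].
Qed.

Lemma ev_mem e : S e -> ev (fun s => e \in s).
Proof.
move=> Se; exists [:: e]; split; last by move=> s _; apply; rewrite mem_head.
by split => // f; rewrite inE => /eqP ->.
Qed.

Lemma bs_split s s' x : fin s -> fin s' -> {subset s <= s'} ->
  bs s' x = bs s x + bs [seq f <- s' | f \notin s] x.
Proof. by move=> [us _] [us' _] sub; apply: sum_split. Qed.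

Lemma proj_split s s' x : fin s -> fin s' -> {subset s <= s'} ->
  proj s' x = proj s x + proj [seq f <- s' | f \notin s] x.
Proof. by move=> [us _] [us' _] sub; apply: sum_split. Qed.

Lemma bs_mono s s' x : fin s -> fin s' -> {subset s <= s'} -> bs s x <= bs s' x.
Proof.
move=> fs fs' sub; rewrite (bs_split x fs fs' sub) lerDl.
by apply: bs_ge0.
Qed.

Lemma lra1 (a b c d t : R) : a < d -> b + c <= t -> t - a < c -> b < d.
Proof. lra. Qed.

Lemma lra2 (n b t : R) : n - b < n - t -> b <= t -> False.
Proof. lra. Qed.

Lemma lra3 (n b0 b T e : R) : T - e < b0 -> b0 <= b -> n <= T -> n - b < e.
Proof. lra. Qed.

Lemma lra4 (p q r e : R) : q - e < p -> p + r <= q -> r < e.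
Proof. lra. Qed.

Lemma small0 (a : R) : (forall d, 0 < d -> a < d) -> 0 <= a -> a = 0.
Proof.
move=> H a0; apply/eqP; rewrite eq_le a0 andbT.
rewrite leNgt; apply/negP => ap.
by have := H a ap; rewrite ltxx.
Qed.

Hypothesis Hcomp : complete_space ip.
Hypothesis HS3 : forall x, (forall u, S u -> ip u x = 0) -> x = 0.

Section Parseval.
Variable x : V.
Let Bset : set R := fun r => exists s, fin s /\ r = bs s x.
Let T := sup Bset.
Let hsB : has_sup Bset.
Proof.
split; first by exists 0, [::]; split; [split|rewrite /bs big_nil].
by exists (nsq x) => _ [s [fs ->]]; apply: bs_le (fin_ortho fs) x.
Qed.
Let bs_leT s : fin s -> bs s x <= T.
Proof. by move=> fs; apply: sup_upper_bound hsB _ _; exists s. Qed.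

Lemma nsq_leT : nsq x <= T.
Proof.
rewrite leNgt; apply/negP => Tlt.
set d := nsq x - T.
have d0 : 0 < d by rewrite /d subr_gt0.
have ex m : exists s, fin s /\ T - (m.+1%:R)^-1 < bs s x.
  have ip0 : 0 < (m.+1%:R : R)^-1 by rewrite invr_gt0 ltr0n.
  have [_ [s [fs ->]] h] := sup_adherent ip0 hsB.
  by exists s.
have [sf Hsf] := choice ex.
pose tm m := undup (flatten (map sf (iota 0 m.+1))).
have tmE m e : (e \in tm m) = has (fun k => e \in sf k) (iota 0 m.+1).
  rewrite /tm mem_undup; elim: (iota 0 m.+1) => //= k r IH.
  by rewrite mem_cat IH.
have ftm m : fin (tm m).
  split; first exact: undup_uniq.
  move=> e; rewrite tmE => /hasP [k _ ek].
  by case: (Hsf k) => -[_ h] _; apply: h.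
have sub_tm m n : (m <= n)%N -> {subset tm m <= tm n}.
  move=> mn e; rewrite !tmE => /hasP [k]; rewrite mem_iota add0n => /andP[_ km] ek.
  by apply/hasP; exists k => //; rewrite mem_iota add0n (leq_trans km).
have sf_tm m : {subset sf m <= tm m}.
  by move=> e em; rewrite tmE; apply/hasP; exists m => //; rewrite mem_iota add0n ltnS leqnn.
have bs_tm m : T - (m.+1%:R)^-1 < bs (tm m) x.
  case: (Hsf m) => fs h; apply: (lt_le_trans h); apply: bs_mono => //.
have inv_pos m : 0 < (m.+1%:R : R)^-1 by rewrite invr_gt0 ltr0n.
pose u m := proj (tm m) x.
have du m n : (m <= n)%N -> nsq (u n - u m) < (m.+1%:R)^-1.
  move=> mn; rewrite /u (proj_split x (ftm m) (ftm n) (sub_tm _ _ mn)) addrAC subrr add0r.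
  rewrite nsq_proj; last exact/fin_ortho/fin_filter.
  have := bs_split x (ftm m) (ftm n) (sub_tm _ _ mn).
  have := bs_leT (ftm n); have := bs_tm m.
  set a := bs (tm m) x; set b := bs (tm n) x; set c := bs _ x; set q := (m.+1%:R)^-1.
  move=> h1 h2 h3; clear -h1 h2 h3. lra.
have inv_small (e : R) : 0 < e -> exists N : nat, forall m, (N <= m)%N -> (m.+1%:R : R)^-1 < e.
  move=> e0; exists (Num.Def.archi_bound (e^-1)) => m Nm.
  have ei : 0 < e^-1 by rewrite invr_gt0.
  have h := archi_boundP (ltW ei).
  rewrite -(invrK e) ltf_pV2 ?posrE ?invr_gt0 ?ltr0n //.
  apply: (lt_le_trans h); rewrite ler_nat; exact: (leq_trans Nm).
have cauchy : forall e : R, 0 < e -> exists N : nat, forall m n, (N <= m)%N -> (N <= n)%N ->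
       hnorm ip (u m - u n) < e.
  move=> e e0; have [N HN] := inv_small (e ^+ 2) (exprn_gt0 2 e0).
  exists N => m n Nm Nn.
  have key a b : (N <= a)%N -> (a <= b)%N -> hnorm ip (u b - u a) < e.
    move=> Na ab; have h1 := du a b ab; have h2 := HN a Na.
    rewrite -(ltr_pXn2r (_ : (0 < 2)%N)) ?nnegrE ?hnorm_ge0 ?ltW // hnorm_sq.
    exact: lt_trans h2.
  have [mn|nm] := leqP m n; first by rewrite hnormB; apply: key.
  by apply: key => //; apply: ltnW.
have [y Hy] := Hcomp cauchy.
have xy : x = y.
  apply/eqP; rewrite -subr_eq0; apply/eqP; apply: HS3 => e Se.
  apply/eqP; rewrite -cmod_eq0; apply/eqP; apply: small0; last exact: cmod_ge0.
  move=> dl dl0.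
  have dl2 : 0 < dl / 2 by rewrite divr_gt0.
  have [N1 HN1] := Hy _ dl2.
  have [N2 HN2] := inv_small _ (exprn_gt0 2 dl2).
  pose m := maxn N1 N2.
  have h1 := HN1 m (leq_maxl _ _); have h2 := HN2 m (leq_maxr _ _).
  have he : hnorm ip e = 1 by apply: hnorm_unit; apply: HS1.
  have c2 : cmod (ip e (u m - y)) < dl / 2.
    by apply: le_lt_trans (cmod_ip _ _) _; rewrite he mul1r.
  have c1 : cmod (ip e (x - u m)) < dl / 2.
    have [etm|etm] := boolP (e \in tm m).
      rewrite ipBr /u proj_ip ?subrr ?cmod0 //; exact: fin_ortho.
    have -> : ip e (x - u m) = ip e x.
      rewrite ipBr /u proj_orth ?subr0 // => f ftm'.
      apply: HS2 => //; first by case: (ftm m) => _; apply.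
      by move=> ef; move: etm; rewrite ef ftm'.
    have fe : fin (e :: tm m).
      by split; [rewrite /= etm; case: (ftm m)|move=> f; rewrite inE => /orP[/eqP ->//|]; case: (ftm m) => _; apply].
    have := bs_leT fe; rewrite /bs big_cons -/(bs (tm m) x) => h3.
    have := bs_tm m.
    move=> h4.
    have h5 : cmod (ip e x) ^+ 2 < (dl / 2) ^+ 2 by exact: (lra1 h2 h3 h4).
    by rewrite -(ltr_pXn2r (_ : (0 < 2)%N)) ?nnegrE ?cmod_ge0 ?ltW.
  have -> : x - y = (x - u m) + (u m - y) by rewrite addrA subrK.
  rewrite ipDr; apply: le_lt_trans (cmodD _ _) _.
  by have := ltrD c1 c2; rewrite -splitr.
have sd : 0 < Num.sqrt d by rewrite sqrtr_gt0.
have [N HN] := Hy _ sd.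
have := HN N (leqnn N); rewrite -xy hnormB /hnorm -/(nsq _).
rewrite /u nsq_sub_proj; last exact: fin_ortho.
rewrite ltr_sqrt // /d => h.
exact: (lra2 h (bs_leT (ftm N))).
Qed.

Lemma parseval : forall eps, 0 < eps -> ev (fun s => nsq (x - proj s x) < eps).
Proof.
move=> eps e0; have [_ [s0 [fs0 ->]] h] := sup_adherent e0 hsB.
exists s0; split => // s fs sub.
rewrite nsq_sub_proj; last exact: fin_ortho.
exact: (lra3 h (bs_mono x fs0 fs sub) nsq_leT).
Qed.

End Parseval.

Lemma vconv_unif (f : nat -> V -> V) (g : V -> V) (r : seq V) :
  (forall e, e \in r -> vconv ip (fun n => f n e) (g e)) ->
  forall eta, 0 < eta -> exists N, forall n, (N <= n)%N -> forall e, e \in r ->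
    hnorm ip (f n e - g e) < eta.
Proof.
move=> H eta eta0; elim: r H => [|a r IH] H; first by exists 0%N => n _ e; rewrite in_nil.
have [N1 H1] := IH (fun e (er : e \in r) => H e (@mem_behead _ (a :: r) e er)).
have [N2 H2] := H a (mem_head a r) _ eta0.
exists (maxn N1 N2) => n Nn e; rewrite inE => /orP[/eqP ->|er].
  by apply: H2; apply: leq_trans Nn; apply: leq_maxr.
by apply: H1 => //; apply: leq_trans Nn; apply: leq_maxl.
Qed.

Lemma sum_le_size (f : V -> R) (eta : R) (s : seq V) :
  (forall e, e \in s -> f e <= eta) -> \sum_(e <- s) f e <= (size s)%:R * eta.
Proof.
elim: s => [|a s IH] H; first by rewrite big_nil mul0r.
rewrite big_cons /= -addn1 natrD mulrDl mul1r addrC.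
apply: lerD; first by apply: IH => e es; apply: H; rewrite inE es orbT.
by apply: H; rewrite mem_head.
Qed.

Lemma trace_approx (A0 : V -> V) t : trace_class_with_trace ip A0 t ->
  forall eps, 0 < eps -> ev (fun s => cmod (\sum_(e <- s) ip e (A0 e) - t) < eps).
Proof.
move=> [xs [ys [[M HM] [Hc Ht]]]] eps e0.
pose a k := hnorm ip (xs k) * hnorm ip (ys k).
have a0 k : 0 <= a k by rewrite mulr_ge0 // hnorm_ge0.
pose P n := \sum_(0 <= k < n) a k.
have HP n : P n <= M by rewrite /P big_mkord; apply: HM.
pose Pset : set R := fun r => exists n, r = P n.
have hsP : has_sup Pset.
  by split; [exists (P 0%N), 0%N|exists M => _ [n ->]].
pose e4 := eps / 4.
have e40 : 0 < e4 by rewrite divr_gt0.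
have [_ [K ->] hK] := sup_adherent e40 hsP.
have tail n : (K <= n)%N -> \sum_(K <= k < n) a k < e4.
  move=> Kn.
  have : P n <= sup Pset by apply: sup_upper_bound => //; exists n.
  rewrite /P (big_cat_nat (leq0n K) Kn) /= -/(P K).
  move: hK; generalize (P K) (sup Pset) (\sum_(K <= k < n) a k) => p q r.
  exact: lra4.
pose Y := \sum_(0 <= k < K) hnorm ip (ys k).
have Y0 : 0 <= Y by apply: sumr_ge0 => k _; apply: hnorm_ge0.
pose dl := e4 / (Y + 1).
have dl0 : 0 < dl by rewrite divr_gt0 // ltr_wpDl.
have evX := ev_nat (fun k (_ : (k < K)%N) => parseval (xs k) (exprn_gt0 2 dl0)).
apply: ev_mono evX => s fs Hs.
have os := fin_ortho fs.
have hxk k : (k < K)%N -> hnorm ip (xs k - proj s (xs k)) < dl.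
  move=> kK; have := Hs k kK.
  by rewrite -hnorm_sq ltr_pXn2r // ?nnegrE ?hnorm_ge0 ?ltW.
pose U n e := \sum_(k < n) ip (ys k) e *: xs k.
pose eta := e4 / ((size s)%:R + 1).
have eta0 : 0 < eta by rewrite divr_gt0 // ltr_wpDl.
have [N1 HN1] := vconv_unif (f := U) (g := A0) (r := s) (fun e _ => Hc e) eta0.
have [N3 HN3] := Ht _ e40.
pose n := maxn K (maxn N1 N3).
have Kn : (K <= n)%N by apply: leq_maxl.
have N1n : (N1 <= n)%N by rewrite /n leq_max leq_maxl orbT.
have N3n : (N3 <= n)%N by rewrite /n leq_max leq_maxr orbT.
pose T1 := \sum_(e <- s) ip e (A0 e - U n e).
pose T2 := \sum_(k < n) ip (ys k) (proj s (xs k) - xs k).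
pose T3 := \sum_(k < n) ip (ys k) (xs k) - t.
have exch : \sum_(e <- s) ip e (U n e) = \sum_(k < n) ip (ys k) (proj s (xs k)).
  rewrite /U /proj.
  under eq_bigr do rewrite ip_sumr.
  rewrite exchange_big /=; apply: eq_bigr => k _.
  rewrite ip_sumr; apply: eq_bigr => e _.
  by rewrite !ipZr mulrC.
have decomp : \sum_(e <- s) ip e (A0 e) - t = T1 + T2 + T3.
  have eT1 : T1 = \sum_(e <- s) ip e (A0 e) - \sum_(e <- s) ip e (U n e).
    by rewrite /T1 -sumrB; apply: eq_bigr => e _; rewrite ipBr.
  have eT2 : T2 = \sum_(k < n) ip (ys k) (proj s (xs k)) - \sum_(k < n) ip (ys k) (xs k).
    by rewrite /T2 -sumrB; apply: eq_bigr => k _; rewrite ipBr.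
  rewrite eT1 eT2 /T3 -exch; ring.
have cT1 : cmod T1 <= e4.
  apply: le_trans (cmod_sum _ _ _) _.
  apply: le_trans (sum_le_size (eta := eta) _) _.
    move=> e es; apply: le_trans (cmod_ip _ _) _.
    rewrite (hnorm_unit (HS1 (proj2 fs e es))) mul1r hnormB.
    exact/ltW/HN1.
  rewrite /eta mulrA ler_pdivrMr ?ltr_wpDl // mulrC ler_wpM2l ?ltW //.
  by rewrite ltrDl ltr01.
have cT2 : cmod T2 < e4 + e4.
  apply: le_lt_trans (cmod_sum _ _ _) _.
  pose b k := hnorm ip (ys k) * hnorm ip (xs k - proj s (xs k)).
  have : \sum_(k < n) cmod (ip (ys k) (proj s (xs k) - xs k)) <= \sum_(k < n) b k.
    apply: ler_sum => k _; rewrite /b hnormB; exact: cmod_ip.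
  move/le_lt_trans; apply.
  rewrite -(big_mkord xpredT b) (big_cat_nat (leq0n K) Kn) /=.
  apply: ler_ltD.
    apply: (@le_trans _ _ (\sum_(0 <= k < K) hnorm ip (ys k) * dl)).
      rewrite big_nat [X in _ <= X]big_nat; apply: ler_sum => k /andP[_ kK].
      by rewrite /b ler_wpM2l ?hnorm_ge0 // ltW // hxk.
    rewrite -mulr_suml -/Y /dl mulrA ler_pdivrMr ?ltr_wpDl // mulrC ler_wpM2l ?ltW //.
    by rewrite ?lerDl ?ltrDl ?ltr01.
  apply: le_lt_trans (tail n Kn).
  rewrite big_nat [X in _ <= X]big_nat; apply: ler_sum => k _.
  by rewrite /b /a mulrC ler_wpM2r ?hnorm_ge0 // hnorm_sub_proj.
have cT3 : cmod T3 < e4 by apply: HN3.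
rewrite decomp.
apply: le_lt_trans (cmodD _ _) _.
apply: (@le_lt_trans _ _ (cmod T1 + cmod T2 + cmod T3)).
  by rewrite lerD2r cmodD.
have -> : eps = e4 + (e4 + e4) + e4 by rewrite /e4; field.
by apply: ltr_leD; [apply: ler_ltD|apply: ltW].
Qed.

End ONS.

Definition ONS (X : V -> Prop) :=
  (forall u, X u -> ip u u = 1) /\ (forall u v, X u -> X v -> u <> v -> ip u v = 0).

Lemma zorn_ons (Q : V -> Prop) (B0 : V -> Prop) : ONS B0 ->
  exists A : V -> Prop, [/\ ONS (fun u => A u \/ B0 u), forall u, A u -> Q u &
    forall z, Q z -> ip z z = 1 -> (forall u, A u \/ B0 u -> ip u z = 0) -> False].
Proof.
move=> [O1 O2].
pose Pz (X : set V) := ONS (fun u => X u \/ B0 u) /\ forall u, X u -> Q u.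
have := @Zorn_bigcup V Pz.
case.
  move=> F FP Ftot; split.
    split.
      move=> u [[X FX Xu]|B0u]; last exact: O1.
      by case: (FP X FX) => -[h _] _; apply: h; left.
    move=> u v [[X FX Xu]|B0u] [[Y FY Yv]|B0v] uv.
    - have [XY|YX] := Ftot X Y FX FY.
        by case: (FP Y FY) => -[_ h] _; apply: h => //; left => //; apply: XY.
      by case: (FP X FX) => -[_ h] _; apply: h => //; left => //; apply: YX.
    - by case: (FP X FX) => -[_ h] _; apply: h => //; [left|right].
    - by case: (FP Y FY) => -[_ h] _; apply: h => //; [right|left].
    - exact: O2.
  by move=> u [X FX Xu]; case: (FP X FX) => _; apply.
move=> A [[[A1 A2] AQ] Amax].
exists A; split => // z Qz zz zA.
have zA' : ~ A z.
  move=> Az; have := zA z (or_introl Az); rewrite zz => /eqP; by rewrite oner_eq0.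
apply: (Amax (fun u => A u \/ u = z)).
  split; first by move=> u Au; left.
  by move=> H; apply: zA'; apply: (H z (or_intror erefl)).
split.
  split.
    by move=> u [[Au|->]|B0u]; [apply: A1; left|exact: zz|apply: A1; right].
  move=> u v [[Au|->]|B0u] [[Av|->]|B0v] uv.
  - by apply: A2 => //; left.
  - by apply: zA; left.
  - by apply: A2 => //; [left|right].
  - by rewrite ipSym zA ?conjc0 //; left.
  - by [].
  - by rewrite ipSym zA ?conjc0 //; right.
  - by apply: A2 => //; [right|left].
  - by apply: zA; right.
  - exact: O2.
by move=> u [Au|->]; [apply: AQ|].
Qed.

Lemma normalize y : y != 0 -> exists y', ip y' y' = 1 /\ forall u, ip u y = 0 -> ip u y' = 0.
Proof.
move=> y0; set h := hnorm ip y.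
have hpos : 0 < h by rewrite lt_def hnorm_eq0 y0 hnorm_ge0.
exists ((h^-1)%:C *: y); split; last by move=> u uy; rewrite ipZr uy mulr0.
rewrite ipZl ipZr ip_nsq -hnorm_sq -/h conjc_real -!rmorphM.
have -> : h^-1 * (h^-1 * h ^+ 2) = 1 by field; rewrite gt_eqF.
by [].
Qed.

Lemma absRe_le_cmod (w : C) : `|cRe w| <= cmod w.
Proof. by rewrite -lecR -normC_cmod; apply: normc_ge_Re. Qed.

Lemma real_self_conj (w : C) : w = conjc w -> cRe w = 0 -> w = 0.
Proof.
case: w => a b /= [] hb ha; rewrite ha.
have -> : b = 0 by move: hb => /eqP; rewrite -subr_eq0 opprK -mulr2n mulrn_eq0 /= => /eqP.
by [].
Qed.

Lemma main_thm N (A : 'I_N -> V -> V) :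
  complete_space ip ->
  (forall i, self_adjoint ip (A i)) ->
  (forall i, trace_class_with_trace ip (A i) 0) ->
  (forall P, orth_projection ip P -> convex_set (joint_num_range ip A P)) ->
  exists B : V -> Prop, orthonormal_basis ip B /\
    (forall g, B g -> forall i, ip g (A i g) = 0).
Proof.
move=> Hcomp Hsa Htr Hconv.
pose iso g := forall i, ip g (A i g) = 0.
have ons0 : ONS (fun _ => False) by split.
have [B [[B1 B2] Biso Bmax]] := zorn_ons iso ons0.
have BB1 u : B u -> ip u u = 1 by move=> Bu; apply: B1; left.
have BB2 u v : B u -> B v -> u <> v -> ip u v = 0 by move=> Bu Bv; apply: B2; left.
exists B; split; last by move=> g Bg i; apply: Biso.
split => // x xB.
have [//|x0] := eqVneq x 0; exfalso.
pose K := KW A B.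
have cK : cvx K := KW_cvx Hconv.
have Kne : exists f, K f.
  have [z0 [z0u z0B]] := normalize x0.
  by exists (fun i => cRe (ip z0 (A i z0))), z0; split => // g Bg; apply: z0B; apply: xB.
have Hb : forall l, (forall f, K f -> 0 <= lin l f) -> forall f, K f -> lin l f = 0.
  move=> l Hl f [z [zB zu Fz]].
  apply: small0; last by apply: Hl; exists z.
  move=> dl dl0.
  pose B0 u := B u \/ u = z.
  have onsB0 : ONS B0.
    split; first by move=> u [Bu|->]; [apply: BB1|].
    move=> u v [Bu|->] [Bv|->] uv.
    - exact: BB2.
    - exact: zB.
    - by rewrite ipSym zB ?conjc0.
    - by [].
  have [A' [[S1 S2] _ Smax]] := zorn_ons (fun _ => True) onsB0.
  pose S u := A' u \/ B0 u.
  have HS3 : forall y, (forall u, S u -> ip u y = 0) -> y = 0.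
    move=> y yS; have [//|y0] := eqVneq y 0; exfalso.
    have [y' [y'u y'S]] := normalize y0.
    by apply: (Smax y' I y'u) => u Su; apply: y'S; apply: yS.
  pose Cl := \sum_i `|l i|.
  have Cl0 : 0 <= Cl by apply: sumr_ge0 => i _; apply: normr_ge0.
  pose eps := dl / (Cl + 1).
  have eps0 : 0 < eps by rewrite divr_gt0 // ltr_wpDl.
  have ev1 := ev_seq (r := enum 'I_N)
     (fun i _ => trace_approx (S := S) S1 S2 Hcomp HS3 (Htr i) eps0).
  have Sz : S z by right; right.
  have [s0 [fs0 H0]] := ev_and ev1 (ev_mem (S := S) Sz).
  have [Hi zs] := H0 s0 fs0 (fun _ h => h).
  pose term e := lin l (fun i => cRe (ip e (A i e))).
  have tpos e : e \in s0 -> 0 <= term e.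
    move=> es; have Se := proj2 fs0 e es.
    have [Be|nBe] := pselect (B e).
      rewrite /term /lin big1 // => i _; rewrite Biso // mulr0 //.
    apply: Hl; exists e; split => //; last by apply: S1.
    move=> g Bg; apply: S2; [right; left| |] => //.
    by move=> ge; apply: nBe; rewrite -ge.
  have fz : lin l f = term z by rewrite /term; congr lin; apply: funext => i; rewrite Fz.
  have sum_ge : term z <= \sum_(e <- s0) term e.
    rewrite (bigD1_seq z) //=; last by case: fs0.
    rewrite lerDl; rewrite big_seq_cond; apply: sumr_ge0 => e /andP[es _].
    exact: tpos.
  have sum_eq : \sum_(e <- s0) term e = \sum_i l i * cRe (\sum_(e <- s0) ip e (A i e)).
    rewrite /term /lin exchange_big /=; apply: eq_bigr => i _.
    by rewrite raddf_sum /= mulr_sumr.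
  have bound : \sum_i l i * cRe (\sum_(e <- s0) ip e (A i e)) <= Cl * eps.
    rewrite /Cl mulr_suml; apply: ler_sum => i _.
    apply: le_trans (ler_norm _) _; rewrite normrM ler_wpM2l //.
    apply: le_trans (absRe_le_cmod _) _.
    have := Hi i (mem_enum _ i); rewrite subr0 => /ltW //.
  have ceps : Cl * eps < dl.
    rewrite /eps mulrA ltr_pdivrMr ?ltr_wpDl // mulrC ltr_pM2l //.
    by rewrite ltrDl ltr01.
  rewrite fz; apply: le_lt_trans sum_ge _; rewrite sum_eq.
  exact: le_lt_trans bound ceps.
have [z [zB zu Fz]] := zero_in cK Kne Hb.
apply: (Bmax z _ zu); last by move=> u [Bu|[]]; apply: zB.
move=> i; apply: real_self_conj; last by rewrite -Fz.
by rewrite -{1}(proj2 (Hsa i)) ipSym.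
Qed.

End HilbA.

Theorem lemma3p6 (R : realType) (V : lmodType R[i]) (ip : V -> V -> R[i])
  (N : nat) (A : 'I_N -> V -> V) :
  is_inner_product ip -> complete_space ip -> separable_space ip ->
  (forall i, self_adjoint ip (A i)) ->
  (forall i, trace_class_with_trace ip (A i) 0) ->
  (forall P, orth_projection ip P -> convex_set (joint_num_range ip A P)) ->
  exists B : V -> Prop, orthonormal_basis ip B /\
    (forall g, B g -> forall i, ip g (A i g) = 0).
Proof.
move=> Hip Hcomp _ Hsa Htr Hconv.
exact: (main_thm Hip Hcomp Hsa Htr Hconv).
Qed.
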